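(* Let $k\geq 1$ be an integer. For every natural number $n\geq 1$, $\sigma_k(B_n)\leq B_{\sigma_k(n)}$, and equality holds only if $n=1$.
   Context: The balancing numbers $(B_n)_{n\geq 0}$ are defined by $B_0=0$, $B_1=1$, $B_{n+1}=6B_n-B_{n-1}$ for $n\geq 1$ (so $B_n=\frac{\alpha^n-\beta^n}{\alpha-\beta}$ with $\alpha=3+2\sqrt2$, $\beta=3-2\sqrt2$). For a positive integer $m$, $\sigma_k(m)$ denotes the sum of the $k$-th powers of the positive divisors of $m$. *)

(* Defs.v *)
From mathcomp Require Import all_boot.
Set Implicit Arguments. Unset Strict Implicit. Unset Printing Implicit Defensive.

(* Balancing numbers: B_0 = 0, B_1 = 1, B_{n+2} = 6 B_{n+1} - B_n.
   We compute the pair (B_n, B_{n+1}) to get a structural recursion.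
   Subtraction is truncated on nat, but 6 B_{n+1} >= B_n always holds
   (the sequence is increasing), so this is the genuine recurrence. *)
Fixpoint balpair (n : nat) : nat * nat :=
  match n with
  | 0 => (0, 1)
  | m.+1 => let: (a, b) := balpair m in (b, 6 * b - a)
  end.

Definition balancing (n : nat) : nat := (balpair n).1.

Definition sigma (k m : nat) : nat := \sum_(d <- divisors m) d ^ k.

(* Main.v *)
Require Import Defs.
From mathcomp Require Import all_boot.
From mathcomp Require Import all_algebra zify ring.
Set Implicit Arguments. Unset Strict Implicit. Unset Printing Implicit Defensive.


Notation B := balancing.

Lemma B0 : B 0 = 0. Proof. by []. Qed.
Lemma B1 : B 1 = 1. Proof. by []. Qed.
Lemma balpair_snd n : (balpair n).2 = B n.+1.
Proof. by rewrite /B /=; case: (balpair n). Qed.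
Lemma BSS_raw n : B n.+2 = 6 * B n.+1 - B n.
Proof.
rewrite /B /=. by case: (balpair n) => a b /=.
Qed.
Lemma B_mono_rec n : B n <= B n.+1 /\ B n.+2 + B n = 6 * B n.+1.
Proof.
elim: n => [|n [IH1 IH2]]; first by [].
have h : B n.+2 = 6 * B n.+1 - B n := BSS_raw n.
split; first lia.
rewrite BSS_raw; lia.
Qed.
Lemma Brec n : B n.+2 + B n = 6 * B n.+1.
Proof. by case: (B_mono_rec n). Qed.
Lemma Bmono1 n : B n <= B n.+1.
Proof. by case: (B_mono_rec n). Qed.
Lemma B5 n : 5 * B n.+1 < B n.+2.
Proof.
elim: n => [|n IH]; first by [].
have := Brec n.+1; have := Bmono1 n; have := Brec n. lia.
Qed.
Lemma Bpos n : 0 < B n.+1.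
Proof. elim: n => [|n IH] //; have := B5 n; lia. Qed.
Lemma Bmono m n : m <= n -> B m <= B n.
Proof.
move=> /subnK <-; elim: (n - m) => [|k IH] //=.
rewrite addSn; exact: leq_trans IH (Bmono1 _).
Qed.
Lemma Bstrict m n : 0 < n -> m < n -> B m < B n.
Proof.
case: n => // n _ lt; case: m lt => [|m] lt; first exact: Bpos.
have := B5 m; have := @Bmono m.+2 n.+1 lt. lia.
Qed.
Lemma Badd m n : B (m + n).+1 + B m * B n = B m.+1 * B n.+1.
Proof.
elim/ltn_ind: n m => -[|[|n]] IH m.
- by rewrite addn0 muln0 addn0 B1 muln1.
- rewrite B1 muln1 addn1 mulnC; exact: Brec.
- have I1 := IH n.+1 (ltnSn _) m.
  have I0 := IH n (leqW (ltnSn _)) m.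
  have R1 := Brec (m + n).+1.
  have R2 := Brec n.+1.
  have R3 := Brec n.
  rewrite !addnS in I1 I0 R1 *.
  nia.
Qed.
Lemma Cassini n : B n.+1 * B n.+1 = B n * B n.+2 + 1.
Proof.
elim: n => [|n IH] //.
have R1 := Brec n.+1. have R2 := Brec n. nia.
Qed.
Lemma Bodd n : odd (B n) = odd n.
Proof.
elim/ltn_ind: n => -[|[|n]] IH //.
have := Brec n. have := IH n (leqW (ltnSn _)).
move=> h e. have : odd (B n.+2 + B n) = odd (6 * B n.+1) by rewrite e.
rewrite oddD oddM /= h /=. by case: (odd (B n.+2)); case: (odd n).
Qed.

Module FrobM.
Import GRing.Theory.
Local Open Scope ring_scope.

Section Frob.
Variable q : nat.
Hypothesis hq : prime q.
Local Notation F := ('F_q).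
Definition pw n : {poly F} := (3%:P + 'X) ^+ n.
Definition oo n : F := (odd_poly (pw n)).[8].
Definition ee n : F := (even_poly (pw n)).[8].

Lemma pwS n : pw n.+1 = 3 *: pw n + pw n * 'X.
Proof. by rewrite /pw exprSr mulrDr mulrC mul_polyC. Qed.

Lemma ooS n : oo n.+1 = 3 * oo n + ee n.
Proof. by rewrite /oo /ee pwS odd_polyD odd_polyZ odd_polyMX hornerD hornerZ. Qed.
Lemma eeS n : ee n.+1 = 3 * ee n + oo n * 8.
Proof. by rewrite /oo /ee pwS even_polyD even_polyZ even_polyMX hornerD hornerZ hornerMX. Qed.

Lemma ooB n : oo n = (B n)%:R.
Proof.
elim/ltn_ind: n => -[|[|n]] IH.
- by rewrite /oo /pw expr0 odd_polyC horner0.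
- by rewrite ooS /oo /ee /pw expr0 odd_polyC even_polyC horner0 hornerC mulr0 add0r.
- have e2 : oo n.+2 = 6 * oo n.+1 - oo n.
    rewrite ooS eeS ooS.
    have -> : ee n = oo n.+1 - 3 * oo n by rewrite ooS; ring.
    ring.
  have h := Brec n.
  have : (B n.+2)%:R = 6 * (B n.+1)%:R - (B n)%:R :> F.
    apply/eqP; rewrite eq_sym subr_eq -natrD h natrM //.
  move=> ->; rewrite e2 IH // IH //.
Qed.
End Frob.

Lemma even_polyXn (R : nzRingType) h : even_poly ('X^(h.*2) : {poly R}) = 'X^h.
Proof.
apply/polyP => i; rewrite coef_even_poly !coefXn.
by rewrite (inj_eq (can_inj doubleK)).
Qed.

Lemma Bq_F q (hq : prime q) (oq : odd q) :
  ((B q)%:R : 'F_q) = 8 ^+ q./2.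
Proof.
have pc : q \in [pchar {poly 'F_q}] by rewrite pchar_poly; exact: pchar_Fp.
rewrite -ooB /oo /pw.
have -> : (3%:P + 'X : {poly 'F_q}) ^+ q = 3%:P + 'X^q.
  rewrite -[LHS](pFrobenius_autE pc) pFrobenius_autD_comm; last exact: commr_polyX.
  rewrite !pFrobenius_autE -polyC_exp.
  by rewrite -(pFrobenius_autE (pchar_Fp hq)) pFrobenius_aut_nat.
rewrite odd_polyD odd_polyC add0r.
have -> : ('X^q : {poly 'F_q}) = 'X^((q./2).*2) * 'X.
  have e : q = ((q./2).*2).+1 by rewrite -{1}(odd_double_half q) oq add1n.
  by rewrite -exprSr -e.
by rewrite odd_polyMX even_polyXn hornerXn.
Qed.

Lemma q_dvd q : prime q -> odd q -> (q %| B q.-1 * B q.+1)%N.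
Proof.
move=> hq oq.
have q0 : (0 < q)%N := prime_gt0 hq.
have hB := Bq_F hq oq.
have u : (8%:R : 'F_q) \is a GRing.unit.
  rewrite unitFpE //.
  have -> : 8%N = (2 ^ 3)%N by [].
  rewrite coprimeXr // prime_coprime //.
  apply/negP => /(dvdn_leq (isT : (0 < 2)%N)); rewrite leq_eqVlt => /orP[/eqP e|].
    by move: oq; rewrite e.
  by rewrite ltnNge prime_gt1.
have f8 : (8%:R : 'F_q) ^+ q = 8%:R.
  by rewrite -(pFrobenius_autE (pchar_Fp hq)) pFrobenius_aut_nat.
have e2 : (8%:R : 'F_q) ^+ (q./2).*2 = 1.
  apply: (mulIr u); rewrite mul1r -exprSr.
  by rewrite (_ : ((q./2).*2.+1 = q)%N) // -{2}(odd_double_half q) oq add1n.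
case: q hq oq q0 hB u f8 e2 => // n hq oq _ hB _ _ e2.
have C := Cassini n.
have : ((B n * B n.+2)%N%:R : 'F_n.+1) = 0.
  have : ((B n * B n.+2 + 1)%N%:R : 'F_n.+1) = 1.
    by rewrite -C natrM hB -expr2 -exprM muln2 e2.
  rewrite addn1 mulrSr => h; apply: (addIr 1); rewrite h add0r //.
move=> /(congr1 (fun x : 'F_n.+1 => nat_of_ord x)).
rewrite val_Fp_nat //= => h; apply/dvdnP.
by exists ((B n * B n.+2) %/ n.+1)%N; rewrite {1}(divn_eq (B n * B n.+2) n.+1) h addn0.
Qed.

End FrobM.
Import FrobM.

Lemma consec q n : prime q -> q %| B n.+1 -> ~~ (q %| B n) /\ ~~ (q %| B n.+2).
Proof.
move=> hq h; have C := Cassini n.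
have q1 : ~~ (q %| 1) by rewrite dvdn1; case: q hq {h} => [|[|]].
have hh : q %| B n * B n.+2 + 1 by rewrite -C dvdn_mulr.
split; apply/negP => h2; move: hh.
- by rewrite dvdn_addr ?(negbTE q1) // dvdn_mulr.
- by rewrite dvdn_addr ?(negbTE q1) // dvdn_mull.
Qed.

Lemma Bgcd q a b : prime q -> q %| B a -> q %| B b -> q %| B (gcdn a b).
Proof.
move=> hq; move: {2}(a + b) (leqnn (a + b)) => n.
elim: n a b => [|n IH] a b.
  by rewrite leqn0 addn_eq0 => /andP[/eqP-> /eqP->].
have key : forall a c, a + (a + c) <= n.+1 -> q %| B a -> q %| B (a + c) ->
    q %| B (gcdn a (a + c)).
  move=> [|a'] c le ha hb; first by rewrite gcd0n.
  rewrite gcdnDl; apply: IH; [lia| exact: ha|].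
  have E := Badd a' c.
  have : q %| B a'.+1 * B c.+1 by rewrite dvdn_mulr.
  rewrite -E addSn in hb *; rewrite dvdn_addr // Euclid_dvdM //.
  by case/orP => // h; case: (consec hq ha) => /negP.
case: (leqP a b) => ab.
  by move=> le ha hb; rewrite -(subnKC ab) in hb *; apply: key => //; rewrite subnKC.
move=> le ha hb; rewrite gcdnC -(subnKC (ltnW ab)) in ha *.
by apply: key => //; rewrite subnKC //; lia.
Qed.

Lemma big_prime_factor p q : prime p -> odd p -> prime q -> q %| B p -> (p.*2 <= q.+1).
Proof.
move=> hp op hq hd.
have oq : odd q.
  case: (boolP (odd q)) => // eq; have := dvdn_trans (eqbLR (esym (dvdn2 q)) eq) hd.
  by rewrite dvdn2 Bodd op.
have q2 : 2 < q by move: (prime_gt1 hq) oq; case: q {hq hd} => [|[|[|]]].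
have := q_dvd hq oq; rewrite Euclid_dvdM // => hj.
have gen : forall j, 0 < j -> ~~ odd j -> q %| B j -> p.*2 <= j.
  move=> j j0 ej qj.
  have := Bgcd hq hd qj.
  have : gcdn p j %| p by apply: dvdn_gcdl.
  case/primeP: hp => _ /[apply] /orP[/eqP ->|/eqP g].
    by rewrite B1 dvdn1 => /eqP e; move: hq; rewrite e.
  have pj : p %| j by rewrite -g dvdn_gcdr.
  have : 2 * p %| j.
    by rewrite Gauss_dvd ?coprime2n ?op // dvdn2 ej pj.
  by move=> /(dvdn_leq j0); rewrite mul2n.
case/orP: hj => hj.
  have : p.*2 <= q.-1.
    apply: gen hj; first lia.
    by case: q q2 oq {hq hd} => //= q' _ ->.
  by move=> h; lia.
have := gen q.+1 isT; rewrite /= oq => /(_ isT hj) //.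
Qed.

Lemma sig1E m : sigma 1 m = \sum_(d <- divisors m) d.
Proof. by rewrite /sigma; apply: eq_bigr => d _; rewrite expn1. Qed.

Lemma sum_sub (s s' : seq nat) (F : nat -> nat) : uniq s -> {subset s <= s'} ->
  \sum_(i <- s) F i <= \sum_(i <- s') F i.
Proof.
move=> us ss.
apply: (@sub_le_big_seq _ addn leq leqnn (fun x y => leq_addr y x) 0 _ s s' xpredT F) => i.
rewrite count_uniq_mem //; case: (boolP (i \in s)) => // /ss his.
by rewrite lt0n; apply/negP => /eqP/count_memPn; rewrite his.
Qed.

Lemma sig_mul q m : prime q -> 0 < m -> sigma 1 (q * m) <= (q + 1) * sigma 1 m.
Proof.
move=> hq m0; have q0 := prime_gt0 hq.
rewrite !sig1E mulnDl mul1n addnC.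
have -> : q * \sum_(d <- divisors m) d = \sum_(d <- map (muln q) (divisors m)) d.
  by rewrite big_map big_distrr.
rewrite -big_cat; apply: sum_sub; first exact: divisors_uniq.
move=> i; rewrite -dvdn_divisors ?muln_gt0 ?q0 // mem_cat => hi.
case: (boolP (q %| i)) => qi.
  apply/orP; right; apply/mapP; exists (i %/ q); last by rewrite mulnC divnK.
  by rewrite -dvdn_divisors // -(dvdn_pmul2l q0) mulnC divnK.
apply/orP; left; rewrite -dvdn_divisors //.
by rewrite -(@Gauss_dvdr i q) // coprime_sym prime_coprime.
Qed.

Lemma prod_bound P : 0 < P -> forall r m, 0 < m -> m < P ^ r ->
  (forall q, prime q -> q %| m -> P <= q) -> r <= P ->
  sigma 1 m * (P - r) <= m * P.
Proof.
move=> P0; elim=> [|r IH] m m0 //; first by rewrite expn0; lia.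
move=> mlt hpf rP.
case: (ltngtP m 1) => [|m1|->]; first lia; last first.
  by rewrite sig1E /divisors /= big_seq1; lia.
set q := pdiv m.
have pq : prime q := pdiv_prime m1.
have qm : q %| m := pdiv_dvd m.
have Pq : P <= q := hpf q pq qm.
set m' := m %/ q.
have em : m = q * m' by rewrite /m' mulnC divnK.
have m'0 : 0 < m' by rewrite /m' divn_gt0 ?prime_gt0 // dvdn_leq.
have m'lt : m' < P ^ r.
  rewrite -(@ltn_pmul2l P) // -expnS; apply: leq_ltn_trans mlt.
  by rewrite em leq_mul2r Pq orbT.
have mm : m' %| m by rewrite em dvdn_mull.
have IH' := IH m' m'0 m'lt
  (fun q' hq' hd => hpf q' hq' (dvdn_trans hd mm)) (ltnW rP).
have sm := sig_mul pq m'0.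
rewrite em.
set t := P - r.+1.
have et : P - r = t + 1 by rewrite /t; lia.
rewrite et in IH'.
have hq : t <= q by rewrite /t; lia.
nia.
Qed.

Lemma dyadic m j : \sum_(1 <= d < 2 ^ j) m %/ d <= j * m.
Proof.
elim: j => [|j IH]; first by rewrite expn0 big_geq.
rewrite (@big_cat_nat _ _ _ (2 ^ j)) //=; last by rewrite expnS leq_pmull.
  2: by rewrite expn_gt0.
rewrite mulSn addnC leq_add //.
apply: leq_trans (_ : \sum_(2 ^ j <= d < 2 ^ j.+1) m %/ 2 ^ j <= _).
  rewrite big_nat [X in _ <= X]big_nat; apply: leq_sum => d /andP[h _].
  by apply: leq_div2l; rewrite ?expn_gt0.
rewrite sum_nat_const_nat expnS mul2n -addnn addnK.
by rewrite mulnC leq_trunc_div.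
Qed.

Lemma dvd_pos x m : 0 < m -> x %| m -> 0 < x.
Proof. by case: x => // m0; rewrite dvd0n => /eqP e; move: m0; rewrite e. Qed.

Lemma divdiv m x : 0 < m -> x %| m -> m %/ (m %/ x) = x.
Proof. by move=> m0 hx; rewrite divnA // mulKn. Qed.

Lemma sig_harm j m : 0 < m -> m < 2 ^ j -> sigma 1 m <= j * m.
Proof.
move=> m0 mlt; rewrite sig1E.
have pe : perm_eq (divisors m) [seq m %/ d | d <- divisors m].
  apply: uniq_perm; first exact: divisors_uniq.
    rewrite map_inj_in_uniq ?divisors_uniq // => x y.
    rewrite -!dvdn_divisors // => hx hy e.
    by rewrite -(divdiv m0 hx) -(divdiv m0 hy) e.
  move=> x; apply/idP/mapP.
    move=> hx; have hx' : x %| m by rewrite dvdn_divisors.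
    exists (m %/ x); first by rewrite -dvdn_divisors // dvdn_div.
    by rewrite divdiv.
  case=> y hy ->; rewrite -dvdn_divisors // dvdn_div // dvdn_divisors //.
rewrite (perm_big _ pe) big_map.
apply: leq_trans (dyadic m j).
rewrite /index_iota.
apply: sum_sub; first exact: divisors_uniq.
move=> d; rewrite -dvdn_divisors // mem_iota => hd.
have d0 := dvd_pos m0 hd.
have := dvdn_leq m0 hd; lia.
Qed.

Lemma Bpow6 n : B n.+1 <= 6 ^ n.
Proof.
elim: n => [|n IH] //; have := Brec n; rewrite expnS; lia.
Qed.

Lemma B5m m : 5 * B m <= B m.+1.
Proof. case: m => [|m] //; have := B5 m; lia. Qed.

Lemma B5pow n t : 5 ^ t * B n <= B (n + t).
Proof.
elim: t => [|t IH]; first by rewrite mul1n addn0.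
rewrite expnS -mulnA addnS; apply: leq_trans (B5m _); lia.
Qed.

Lemma superadd a b : B a * B b <= B (a + b).
Proof.
elim: a b => [|a IH] [|b] //; first by rewrite muln0.
have E := Badd a b.
have I := IH b.
have M1 := Bmono1 (a + b).
have := B5m (a + b).+1.
rewrite addSn addnS; lia.
Qed.

Lemma powB n j X : B n ^ j * B X <= B (j * n + X).
Proof.
elim: j => [|j IH]; first by rewrite mul1n.
rewrite expnS -mulnA mulSn -addnA.
by apply: leq_trans (superadd _ _); rewrite leq_mul2l IH orbT.
Qed.

Lemma sigma1_1 k : sigma k 1 = 1.
Proof. by rewrite /sigma /divisors /= big_seq1 exp1n. Qed.

Lemma sigk_le k m : 0 < m -> sigma k.+1 m <= m ^ k * sigma 1 m.
Proof.
move=> m0; rewrite sig1E /sigma big_distrr /= big_seq [X in _ <= X]big_seq.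
apply: leq_sum => d; rewrite -dvdn_divisors // => hd.
rewrite expnSr leq_mul2r; apply/orP; right.
have h := dvdn_leq m0 hd; elim: k {hd} => // k IH; rewrite !expnS leq_mul //.
Qed.

Lemma sig_lower3 n b : 1 < b -> b < n -> b %| n -> 1 + b + n <= sigma 1 n.
Proof.
move=> b1 bn hb; have n0 : 0 < n by lia.
rewrite sig1E.
have -> : 1 + b + n = \sum_(d <- [:: 1; b; n]) d by rewrite !big_cons big_nil; lia.
apply: sum_sub.
  rewrite /= !inE !negb_or; lia.
move=> d; rewrite !inE -dvdn_divisors // => /orP[/eqP->|/orP[/eqP->|/eqP->]] //.
Qed.

Lemma sig_lower2 n : 1 < n -> 1 + n <= sigma 1 n.
Proof.
move=> n1; have n0 : 0 < n by lia.
rewrite sig1E.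
have -> : 1 + n = \sum_(d <- [:: 1; n]) d by rewrite !big_cons big_nil; lia.
apply: sum_sub.
  rewrite /= !inE; lia.
move=> d; rewrite !inE -dvdn_divisors // => /orP[/eqP->|/eqP->] //.
Qed.

Lemma le_pow n j : 1 < n -> j.+1 <= n ^ j.
Proof.
move=> n1; elim: j => [|j IH] //; rewrite expnS; nia.
Qed.

Lemma sigk_lower k n : 1 < n -> k * n + sigma 1 n <= sigma k.+1 n.
Proof.
move=> n1; have n0 : 0 < n by lia.
rewrite sig1E /sigma.
have hn : n \in divisors n by rewrite -dvdn_divisors.
rewrite !(bigD1_seq n hn (divisors_uniq n)) /= addnA.
apply: leq_add.
  have := le_pow k n1; rewrite expnS; nia.
apply: leq_sum => d _; case: d => // d; rewrite expnS; nia.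
Qed.

Lemma three_sq b : 3 * b ^ 2 < 5 ^ b.
Proof.
elim: b => [|b IH] //.
case: b IH => [|b] IH //; move: IH; rewrite -!mulnn.
set X := 5 ^ b.+1; move=> IH.
rewrite (expnS 5 b.+1) -/X; nia.
Qed.

Lemma pow_bound h : 0 < h -> (6 ^ 2) ^ h < ((4 * h).+1) ^ (3 * h).
Proof.
move=> h0; rewrite expnM.
apply: (@leq_trans (125 ^ h)); first by rewrite ltn_exp2r.
rewrite leq_exp2r //.
apply: (@leq_trans (5 ^ 3)) => //; rewrite leq_exp2r //; lia.
Qed.

Lemma prime_case p : prime p -> odd p -> sigma 1 (B p) < B (sigma 1 p).
Proof.
move=> hp op.
have p1 := prime_gt1 hp.
set h := p./2.
have ep : p = h.*2.+1 by rewrite -{1}(odd_double_half p) op add1n.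
have h1 : 0 < h by rewrite /h; lia.
set m := B p.
have m0 : 0 < m by rewrite /m ep Bpos.
set P := (4 * h).+1.
have key := @prod_bound P isT (3 * h) m m0.
have mlt : m < P ^ (3 * h).
  apply: (@leq_ltn_trans (6 ^ p.-1)); first by rewrite /m ep /= Bpow6.
  by rewrite ep /= -muln2 mulnC expnM; apply: pow_bound.
have pf : forall q, prime q -> q %| m -> P <= q.
  move=> q hq hd; have := big_prime_factor hp op hq hd; rewrite /P ep; lia.
have := key mlt pf; rewrite /P; move/(_ (ltac:(lia))).
have -> : (4 * h).+1 - 3 * h = h.+1 by lia.
move=> hs.
have s4 : sigma 1 m < 4 * m by nia.
apply: (@leq_trans (B p.+1)).
  have := B5m p; lia.
by apply: Bmono; have := sig_lower2 p1; lia.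
Qed.

Lemma comp_case n : 1 < n -> ~~ prime n -> sigma 1 (B n) < B (sigma 1 n).
Proof.
move=> n1 np.
set s := pdiv n.
have ps : prime s := pdiv_prime n1.
have sn : s %| n := pdiv_dvd n.
have n0 : 0 < n by lia.
have s1 := prime_gt1 ps.
have sltn : s < n.
  rewrite ltn_neqAle dvdn_leq // andbT; apply/eqP => e; move: np; rewrite -e ps //.
set b := n %/ s.
have en : n = s * b by rewrite /b mulnC divnK.
have b1 : 1 < b by move: sltn; rewrite en; nia.
have sb : s <= b by apply: pdiv_min_dvd => //; rewrite en dvdn_mull.
have bn : b < n by rewrite en; nia.
have bd : b %| n by rewrite en dvdn_mull.
have low := sig_lower3 b1 bn bd.
set m := B n.
have m0 : 0 < m := @Bstrict 0 n n0 n0.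
have mlt : m < 2 ^ (3 * n.-1).
  apply: (@leq_ltn_trans (6 ^ n.-1)); first by rewrite /m -(ltn_predK n1); exact: Bpow6.
  rewrite expnM ltn_exp2r //; lia.
have hs := sig_harm m0 mlt.
have t3 := three_sq b.
have hb : 3 * n.-1 <= 5 ^ b by move: t3; rewrite -mulnn en; nia.
have := B5pow n b; rewrite -/m => h5.
apply: (@leq_ltn_trans (B (n + b))).
  apply: leq_trans hs _; apply: leq_trans h5; by rewrite leq_mul2r hb orbT.
apply: Bstrict; lia.
Qed.

Lemma k1_case n : 1 < n -> sigma 1 (B n) < B (sigma 1 n).
Proof.
move=> n1; case: (boolP (prime n)) => hp; last exact: comp_case.
case: (boolP (odd n)) => on; first exact: prime_case.
have : n = 2.
  have : 2 %| n by rewrite dvdn2.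
  by rewrite (dvdn_prime2 (isT : prime 2) hp) => /eqP.
by move=> ->; rewrite /sigma unlock /=.
Qed.

Theorem theorem3p1 (k : nat) (hk : 1 <= k) :
  forall n : nat, 1 <= n ->
    sigma k (balancing n) <= balancing (sigma k n) /\
    (sigma k (balancing n) = balancing (sigma k n) -> n = 1).
Proof.
move=> n n0; case: (ltngtP n 1) => [|n1|->]; first lia; last first.
  by rewrite B1 !sigma1_1 B1.
suff lt : sigma k (B n) < B (sigma k n).
  by split; [exact: ltnW | move=> e; move: lt; rewrite e ltnn].
case: k hk => // k _.
have m0 : 0 < B n := @Bstrict 0 n n0 n0.
apply: leq_ltn_trans (sigk_le k m0) _.
apply: (@leq_trans (B n ^ k * B (sigma 1 n))).
  by rewrite ltn_pmul2l ?expn_gt0 ?m0 // k1_case.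
apply: leq_trans (powB n k (sigma 1 n)) _.
by apply: Bmono; rewrite sigk_lower.
Qed.
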